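(* In the zero-sum three-door Monty Hall game described in the context, the mixed strategy $P^*$ of Conie assigning probability $1/3$ to each of $1\,\mathrm{s}\,\mathrm{s}$, $2\,\mathrm{s}\,\mathrm{s}$, $3\,\mathrm{s}\,\mathrm{s}$ (choose a door uniformly at random, then always switch) is Conie's unique minimax strategy, i.e. the unique mixed strategy $P$ with $\min_Q W(P,Q)=\max_{P'}\min_Q W(P',Q)$.
   Context: Doors are numbered $1,2,3$. A pure strategy of Monte is a pair $(\theta,d)$ with $\theta\in\{1,2,3\}$ (the door hiding the prize) and $d\in\{1,2,3\}\setminus\{\theta\}$ (six strategies). A pure strategy of Conie is a triple $x\,a\,b$ with $x\in\{1,2,3\}$ and $a,b\in\{\mathrm{h},\mathrm{s}\}$ (twelve strategies). Under the profile $((\theta,d),x\,a\,b)$: Monte offers door $y=\theta$ if $x\neq\theta$ and $y=d$ if $x=\theta$; Conie's action is $a$ if $y$ is the smaller of the two doors in $\{1,2,3\}\setminus\{x\}$ and $b$ otherwise; her final choice is $z=x$ for action $\mathrm{h}$ and $z=y$ for action $\mathrm{s}$; she wins (payoff 1) iff $z=\theta$, else payoff 0; Monte's payoff is the negative. Mixed strategies are probability distributions on pure strategies, played independently; $W(P,Q)$ denotes the probability that Conie wins when Conie plays $P$ and Monte plays $Q$. *)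

(* Defs.v *)
From HB Require Import structures.
From mathcomp Require Import all_boot all_order all_algebra.
From mathcomp Require Import all_classical all_reals.
Set Implicit Arguments. Unset Strict Implicit. Unset Printing Implicit Defensive.
Import Order.TTheory GRing.Theory Num.Theory.
Local Open Scope ring_scope.
Local Open Scope classical_set_scope.

(* Doors 1,2,3 are represented by 'I_3 = {0,1,2} (door k+1 is ordinal k). *)
Definition door := 'I_3.

Definition monte_pure := {p : door * door | p.1 != p.2}.
(* Conie's pure strategies x a b; the booleans are true for "s" (switch),
   false for "h" (hold). *)
Definition conie_pure := (door * bool * bool)%type.

Definition win (c : conie_pure) (m : monte_pure) : bool :=
  let: (x, a, b) := c in
  let theta := (val m).1 in
  let d := (val m).2 in
  let y := if x != theta then theta else d in
  (* y is the smaller of the two doors other than x iff every door other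
     than x and y is larger than y *)
  let y_small := [forall z : door, ((z != x) && (z != y)) ==> (y < z)%N] in
  let act := if y_small then a else b in
  let z := if act then y else x in
  z == theta.

Section Game.
Variable R : realType.

Definition is_mixed (T : finType) (P : {ffun T -> R}) : Prop :=
  (forall t, 0 <= P t) /\ \sum_(t : T) P t = 1.

Definition W (P : {ffun conie_pure -> R}) (Q : {ffun monte_pure -> R}) : R :=
  \sum_(c : conie_pure) \sum_(m : monte_pure) P c * Q m * (win c m)%:R.

Definition worst (P : {ffun conie_pure -> R}) : R :=
  inf [set W P Q | Q in [set Q : {ffun monte_pure -> R} | is_mixed Q]].

Definition game_value : R :=
  sup [set worst P | P in [set P : {ffun conie_pure -> R} | is_mixed P]].

Definition is_minimax (P : {ffun conie_pure -> R}) : Prop :=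
  is_mixed P /\ worst P = game_value.

Definition Pstar : {ffun conie_pure -> R} :=
  [ffun c => let: (_, a, b) := c in if a && b then 3^-1 else 0].
End Game.

(* Main.v *)
Require Import Defs.
From mathcomp Require Import all_boot all_order all_algebra.
From mathcomp Require Import all_classical all_reals.
From mathcomp Require Import lra.
Set Implicit Arguments. Unset Strict Implicit. Unset Printing Implicit Defensive.
Import Order.TTheory GRing.Theory Num.Theory.
Local Open Scope ring_scope.

Definition o0 : door := @Ordinal 3 0 isT.
Definition o1 : door := @Ordinal 3 1 isT.
Definition o2 : door := @Ordinal 3 2 isT.

Lemma sum_door (R : realType) (F : door -> R) : \sum_(x : door) F x = F o0 + F o1 + F o2.
Proof. rewrite /door !big_ord_recr big_ord0 /= add0r.
by congr (_ + _ + _); congr F; apply: val_inj. Qed.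

Lemma sum_conie (R : realType) (F : conie_pure -> R) : \sum_(c : conie_pure) F c =
  F (o0,true,true) + F (o0,true,false) + F (o0,false,true) + F (o0,false,false) +
  F (o1,true,true) + F (o1,true,false) + F (o1,false,true) + F (o1,false,false) +
  F (o2,true,true) + F (o2,true,false) + F (o2,false,true) + F (o2,false,false).
Proof.
transitivity (\sum_(p : door * bool) \sum_(b : bool) F (p, b)).
  rewrite pair_bigA; apply: eq_bigr => -[[x a] b] _ //.
transitivity (\sum_(x : door) \sum_(a : bool) \sum_(b : bool) F (x, a, b)).
  by rewrite [RHS]pair_bigA; apply: eq_bigr => -[x a] _.
rewrite sum_door !big_bool /=. lra.
Qed.

Definition mp (i j : door) (H : i != j) : monte_pure := exist _ (i, j) H.

Lemma forall_door (p : pred door) : [forall z, p z] = [&& p o0, p o1 & p o2].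
Proof.
apply/forallP/and3P => [H|[H0 H1 H2] z]; first by split.
case: z => [[|[|[|n]]] Hz] //.
- by have -> : Ordinal Hz = o0 by apply: val_inj.
- by have -> : Ordinal Hz = o1 by apply: val_inj.
- by have -> : Ordinal Hz = o2 by apply: val_inj.
Qed.

Definition win' (c : conie_pure) (m : monte_pure) : bool :=
  let: (x, a, b) := c in
  let theta := (val m).1 in
  let d := (val m).2 in
  let y := if x != theta then theta else d in
  let p := fun z : door => ((z != x) && (z != y)) ==> (y < z)%N in
  let y_small := [&& p o0, p o1 & p o2] in
  let act := if y_small then a else b in
  let z := if act then y else x in
  z == theta.

Lemma winE c m : win c m = win' c m.
Proof. by case: c => [[x a] b]; rewrite /win /win' forall_door. Qed.

Lemma test : win (o0,true,false) (@mp o1 o2 isT) = true.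
Proof. by rewrite winE; vm_compute. Qed.
Definition w (R : realType) (P : {ffun conie_pure -> R}) (m : monte_pure) : R :=
  \sum_c P c * (win c m)%:R.

Section Proofs.
Variable R : realType.
Implicit Types (P : {ffun conie_pure -> R}) (Q : {ffun monte_pure -> R}).

Lemma W_lin P Q : W P Q = \sum_m Q m * w P m.
Proof.
rewrite /W exchange_big; apply: eq_bigr => m _; rewrite /w mulr_sumr.
by apply: eq_bigr => c _; rewrite mulrAC mulrC.
Qed.

Definition Qpure (m0 : monte_pure) : {ffun monte_pure -> R} :=
  [ffun m => (m == m0)%:R].

Lemma Qpure_mixed m0 : is_mixed (Qpure m0).
Proof.
split=> [m|]; first by rewrite ffunE ler0n.
rewrite (bigD1 m0) //= big1 => [|m /negbTE Hm]; first by rewrite ffunE eqxx addr0.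
by rewrite ffunE Hm.
Qed.

Lemma W_pure P m0 : W P (Qpure m0) = w P m0.
Proof.
rewrite W_lin (bigD1 m0) //= big1 => [|m /negbTE Hm]; first by rewrite ffunE eqxx mul1r addr0.
by rewrite ffunE Hm mul0r.
Qed.

Lemma W_ge0 P Q : is_mixed P -> is_mixed Q -> 0 <= W P Q.
Proof.
move=> [HP _] [HQ _]; apply: sumr_ge0 => c _; apply: sumr_ge0 => m _.
by rewrite !mulr_ge0.
Qed.

Lemma worst_le P Q : is_mixed P -> is_mixed Q -> worst P <= W P Q.
Proof.
move=> HP HQ; apply: ge_inf; last by exists Q.
by exists 0 => _ [Q' HQ' <-]; apply: W_ge0.
Qed.

Lemma le_worst P c : (forall Q, is_mixed Q -> c <= W P Q) -> c <= worst P.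
Proof.
move=> H; apply: lb_le_inf.
  by exists (W P (Qpure (@mp o0 o1 isT))); exists (Qpure (@mp o0 o1 isT)) => //; exact: Qpure_mixed.
by move=> _ [Q HQ <-]; apply: H.
Qed.

Lemma win_ss x m : win (x, true, true) m = (x != (val m).1).
Proof.
case: m => [[t d] /= H]; rewrite /win /= if_same.
by case: (x != t); rewrite ?eqxx //= eq_sym (negbTE H).
Qed.

Lemma w_Pstar m : w (Pstar R) m = 2 / 3.
Proof.
rewrite /w sum_conie !ffunE !win_ss /= !mul0r !addr0.
case: m => [[t d] /= _].
case: t => [[|[|[|n]]] Ht] //; rewrite /o0 /o1 /o2 /=; lra.
Qed.

Lemma Pstar_mixed : is_mixed (Pstar R).
Proof.
split=> [[[x a] b]|]; first by rewrite ffunE; case: a b => [] []; rewrite ?invr_ge0.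
rewrite sum_conie !ffunE /=; lra.
Qed.

Lemma worst_Pstar : worst (Pstar R) = 2 / 3.
Proof.
apply/eqP; rewrite eq_le; apply/andP; split.
  by rewrite -(w_Pstar (@mp o0 o1 isT)) -W_pure worst_le //; [exact: Pstar_mixed|exact: Qpure_mixed].
apply: le_worst => Q [_ HQ]; rewrite W_lin.
under eq_bigr do rewrite w_Pstar.
by rewrite -mulr_suml HQ mul1r.
Qed.

Lemma worst_le_w P m : is_mixed P -> worst P <= w P m.
Proof. by move=> HP; rewrite -W_pure worst_le //; exact: Qpure_mixed. Qed.

Lemma key P : is_mixed P -> worst P <= 2 / 3 /\ (2 / 3 <= worst P -> P = Pstar R).
Proof.
move=> HP.
have h1 := worst_le_w (@mp o0 o1 isT) HP.
have h2 := worst_le_w (@mp o0 o2 isT) HP.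
have h3 := worst_le_w (@mp o1 o0 isT) HP.
have h4 := worst_le_w (@mp o1 o2 isT) HP.
have h5 := worst_le_w (@mp o2 o0 isT) HP.
have h6 := worst_le_w (@mp o2 o1 isT) HP.
move: h1 h2 h3 h4 h5 h6; rewrite /w !sum_conie !winE /win' /= !mulr1 !mulr0 !addr0 !add0r => h1 h2 h3 h4 h5 h6.
case: HP => Hge Hs; rewrite sum_conie in Hs.
have := Hge (o0,true,true); have := Hge (o0,true,false); have := Hge (o0,false,true); have := Hge (o0,false,false).
have := Hge (o1,true,true); have := Hge (o1,true,false); have := Hge (o1,false,true); have := Hge (o1,false,false).
have := Hge (o2,true,true); have := Hge (o2,true,false); have := Hge (o2,false,true); have := Hge (o2,false,false).
move=> g1 g2 g3 g4 g5 g6 g7 g8 g9 g10 g11 g12.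
split; first lra.
move=> Hw; apply/ffunP => -[[x a] b]; rewrite ffunE.
case: x => [[|[|[|n]]] Hx] //.
- have -> : Ordinal Hx = o0 by apply: val_inj.
  by case: a; case: b => /=; lra.
- have -> : Ordinal Hx = o1 by apply: val_inj.
  by case: a; case: b => /=; lra.
- have -> : Ordinal Hx = o2 by apply: val_inj.
  by case: a; case: b => /=; lra.
Qed.

Lemma game_value_eq : game_value R = 2 / 3.
Proof.
apply/eqP; rewrite eq_le; apply/andP; split.
  apply: ge_sup; first by exists (worst (Pstar R)); exists (Pstar R) => //; exact: Pstar_mixed.
  by move=> _ [P HP <-]; case: (key HP).
rewrite -worst_Pstar; apply: ub_le_sup; last by exists (Pstar R) => //; exact: Pstar_mixed.
by exists (2 / 3) => _ [P HP <-]; case: (key HP).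
Qed.
End Proofs.

Theorem mainTheorem8 (R : realType) (P : {ffun conie_pure -> R}) :
  is_minimax P <-> P = Pstar R.
Proof.
split.
  move=> [HP Hw]; have [_ H] := key HP; apply: H.
  by rewrite Hw game_value_eq.
move=> ->; split; first exact: Pstar_mixed.
by rewrite worst_Pstar game_value_eq.
Qed.
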